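(* Assume $0<q_{00}$ and that $M=V\Lambda V^{-1}$ with $\Lambda=\mathrm{diag}(\lambda_0,\dots,\lambda_r)$, all $\lambda_x\neq 0$, $\lambda_r=1$ and column $r$ of $V$ equal to $e_r$. Define $\alpha^0_x=\frac{\lambda_x}{q_{00}}V_{0x}(V^{-1})_{x0}$ for $x\in\mathcal S$, and, if $\nu_0<1$, $\nu'=\frac{1}{1-\nu_0}(0,\nu_1,\dots,\nu_r)^{\mathrm T}$ and $\alpha^1_x=\frac{\lambda_x}{q_{00}}V_{0x}\sum_{z\in\mathcal S}(V^{-1})_{xz}\nu'_z$. Then $\alpha^0_r=\alpha^1_r=0$ and $$\sum_{x\in\mathcal S}\alpha^0_x=1,\qquad \sum_{x\in\mathcal S}\frac{\alpha^0_x}{\lambda_x}=\frac1{q_{00}},\qquad 0\le q_{00}\sum_{x\in\mathcal S}\alpha^1_x\le 1,\qquad \sum_{x\in\mathcal S}\frac{\alpha^1_x}{\lambda_x}=0.$$ Moreover $\alpha_x=\nu_0\alpha^0_x+(1-\nu_0)\alpha^1_x$, where $\alpha_x=V_{0x}\frac{\lambda_x}{q_{00}}\sum_z(V^{-1})_{xz}\nu_z$.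
   Context: Fix $r\ge1$ and $\mathcal S=\{0,1,\dots,r\}$. Let $q_{xz}\in[0,1]$ for $x\in\mathcal S$, $z\in\{0,\dots,r-1\}$, with $\sum_x q_{xz}=1$ for each such $z$. Define column-stochastic matrices $M^{\ell}$, $M^{s}$ indexed by $\mathcal S$: column $0$ of $M^\ell$ is $e_0$, column $r$ of $M^\ell$ is $e_r$, $M^\ell_{xz}=q_{xz}$ for $1\le z\le r-1$; column $0$ of $M^s$ is $(q_{00},\dots,q_{r0})^{\mathrm T}$ and $M^s_{xz}=\delta_{xz}$ for $z\ge1$. Set $M=M^sM^\ell$. $\nu=(\nu_0,\dots,\nu_r)$ is a probability vector on $\mathcal S$; $e_x$ denotes the $x$-th standard basis vector. *)

(* Defs.v *)
From HB Require Import structures.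
From mathcomp Require Import all_boot all_order all_algebra.
Set Implicit Arguments. Unset Strict Implicit. Unset Printing Implicit Defensive.
Import Order.TTheory GRing.Theory Num.Theory.
Local Open Scope ring_scope.

(* The family q_{xz} is stored as a
   matrix q : 'M_(r.+1); only the columns z with z < r (i.e. z in 0..r-1)
   are meaningful, column r is ignored by every definition below. *)

Section Defs.
Variables (R : numFieldType) (r : nat).

Definition Mell (q : 'M[R]_(r.+1)) : 'M[R]_(r.+1) :=
  \matrix_(x, z) if (val z == 0)%N then (val x == 0)%:R
                 else if (val z == r)%N then (val x == r)%:R
                 else q x z.

Definition Mess (q : 'M[R]_(r.+1)) : 'M[R]_(r.+1) :=
  \matrix_(x, z) if (val z == 0)%N then q x ord0 else (x == z)%:R.

Definition Mfull (q : 'M[R]_(r.+1)) : 'M[R]_(r.+1) := Mess q *m Mell q.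

Definition Lam (lam : 'I_(r.+1) -> R) : 'M[R]_(r.+1) := diag_mx (\row_x lam x).

Definition alpha0 (q : 'M[R]_(r.+1)) (V : 'M[R]_(r.+1)) (lam : 'I_(r.+1) -> R)
  (x : 'I_(r.+1)) : R :=
  lam x / q ord0 ord0 * V ord0 x * (invmx V) x ord0.

Definition nuprime (nu : 'I_(r.+1) -> R) (z : 'I_(r.+1)) : R :=
  (1 - nu ord0)^-1 * (if (val z == 0)%N then 0 else nu z).

Definition alpha1 (q : 'M[R]_(r.+1)) (V : 'M[R]_(r.+1)) (lam : 'I_(r.+1) -> R)
  (nu : 'I_(r.+1) -> R) (x : 'I_(r.+1)) : R :=
  lam x / q ord0 ord0 * V ord0 x * \sum_z (invmx V) x z * nuprime nu z.

Definition alpha (q : 'M[R]_(r.+1)) (V : 'M[R]_(r.+1)) (lam : 'I_(r.+1) -> R)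
  (nu : 'I_(r.+1) -> R) (x : 'I_(r.+1)) : R :=
  V ord0 x * (lam x / q ord0 ord0) * \sum_z (invmx V) x z * nu z.

End Defs.

(* Main.v *)
Require Import Defs.
From HB Require Import structures.
From mathcomp Require Import all_boot all_order all_algebra.
From mathcomp Require Import ring.
Import Order.TTheory GRing.Theory Num.Theory.
Local Open Scope ring_scope.

Lemma sum_mulmx (R : numFieldType) n (B C : 'M[R]_n) i (c : 'I_n -> R) :
  \sum_z (B *m C) i z * c z = \sum_x B i x * \sum_z C x z * c z.
Proof.
under eq_bigr do rewrite mxE mulr_suml.
rewrite exchange_big; apply: eq_bigr => x _; rewrite mulr_sumr.
by apply: eq_bigr => z _; rewrite mulrA.
Qed.

Lemma sum_delta (R : numFieldType) n (c : 'I_n.+1 -> R) :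
  \sum_z (ord0 == z)%:R * c z = c ord0.
Proof.
rewrite (bigD1 ord0) //= ?eqxx ?mul1r big1 ?addr0 // => z /negPf.
by rewrite eq_sym => ->; rewrite mul0r.
Qed.

Theorem mainTheorem4 (R : numFieldType) (r : nat) (hr : (1 <= r)%N)
  (q : 'M[R]_(r.+1))
  (hq01 : forall (x z : 'I_(r.+1)), (val z < r)%N -> 0 <= q x z <= 1)
  (hqsum : forall z : 'I_(r.+1), (val z < r)%N -> \sum_x q x z = 1)
  (nu : 'I_(r.+1) -> R)
  (hnu0 : forall x, 0 <= nu x) (hnu1 : \sum_x nu x = 1)
  (V : 'M[R]_(r.+1)) (lam : 'I_(r.+1) -> R)
  (hq00 : 0 < q ord0 ord0)
  (hV : V \in unitmx)
  (hM : Mfull q = V *m Lam lam *m invmx V)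
  (hlam : forall x, lam x != 0)
  (hlamr : lam ord_max = 1)
  (hVr : forall i : 'I_(r.+1), V i ord_max = (i == ord_max)%:R) :
  [/\ alpha0 q V lam ord_max = 0,
      \sum_x alpha0 q V lam x = 1,
      \sum_x alpha0 q V lam x / lam x = (q ord0 ord0)^-1 &
      (nu ord0 < 1 ->
       [/\ alpha1 q V lam nu ord_max = 0,
           0 <= q ord0 ord0 * \sum_x alpha1 q V lam nu x <= 1,
           \sum_x alpha1 q V lam nu x / lam x = 0 &
           forall x, alpha q V lam nu x
                     = nu ord0 * alpha0 q V lam x
                       + (1 - nu ord0) * alpha1 q V lam nu x])].
Proof.
set W := invmx V.
set q0 := q ord0 ord0.
have q0n : q0 != 0 by rewrite gt_eqF.
have V0r : V ord0 ord_max = 0.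
  rewrite hVr; case: eqP => // /(congr1 val) /= h; by move: hr; rewrite -h.
have hVL : forall x, (V *m Lam lam) ord0 x = V ord0 x * lam x.
  by move=> x; rewrite /Lam mul_mx_diag !mxE.
have hM0 : forall z, Mfull q ord0 z = q0 * Mell q ord0 z.
  move=> z; rewrite /Mfull mxE (bigD1 ord0) //= big1 ?addr0.
    by rewrite /Mess mxE eqxx.
  move=> y hy; rewrite /Mess mxE; case: ifP => [/eqP h|_].
    by move: hy; have -> : y = ord0 by apply: val_inj. 
  by rewrite eq_sym (negPf hy) mul0r.
have key : forall c, \sum_x lam x * V ord0 x * \sum_z W x z * c z
                     = \sum_z Mfull q ord0 z * c z.
  move=> c; rewrite hM sum_mulmx; apply: eq_bigr => x _.
  by rewrite hVL (mulrC (V _ _)).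
have key2 : forall c, \sum_x V ord0 x * \sum_z W x z * c z = c ord0.
  move=> c; rewrite -sum_mulmx /W mulmxV //.
  by under eq_bigr do rewrite mxE mulrnAl mul1r -mulr_natl; rewrite sum_delta.
have hW0 : forall x, \sum_z W x z * (ord0 == z)%:R = W x ord0.
  by move=> x; under eq_bigr do rewrite mulrC; rewrite sum_delta.
have Mell00 : Mell q ord0 ord0 = 1 by rewrite /Mell mxE.
split.
- by rewrite /alpha0 V0r !mulr0 mul0r.
- transitivity (q0^-1 * \sum_x lam x * V ord0 x * \sum_z W x z * (ord0 == z)%:R).
    rewrite mulr_sumr; apply: eq_bigr => x _; rewrite hW0 /alpha0; ring.
  by rewrite key; under eq_bigr do rewrite mulrC; rewrite sum_delta hM0 Mell00 mulr1 mulVf.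
- transitivity (q0^-1 * \sum_x V ord0 x * \sum_z W x z * (ord0 == z)%:R).
    rewrite mulr_sumr; apply: eq_bigr => x _; rewrite hW0 /alpha0.
    by rewrite /q0 /W; field; rewrite hlam -/q0 q0n.
  by rewrite key2 eqxx mulr1.
move=> hnu.
have h1n : 1 - nu ord0 != 0 by rewrite subr_eq0 eq_sym lt_eqF.
have np0 : nuprime nu ord0 = 0 by rewrite /nuprime /= mulr0.
split.
- by rewrite /alpha1 V0r !mulr0 mul0r.
- have -> : q0 * \sum_x alpha1 q V lam nu x
            = q0 * \sum_z Mell q ord0 z * nuprime nu z.
    transitivity (\sum_z Mfull q ord0 z * nuprime nu z).
      rewrite -key mulr_sumr; apply: eq_bigr => x _; rewrite /alpha1 /q0 /W.
      field. exact: q0n.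
    rewrite mulr_sumr; apply: eq_bigr => z _; by rewrite hM0 mulrA.
  have hMell : forall z, 0 <= Mell q ord0 z <= 1.
    move=> z; rewrite /Mell mxE; case: ifP => _; first by rewrite /= ler01 lexx ?ler01.
    case: ifP => hzr; first by case: (_ == _)%N; rewrite /= ?lexx ?ler01.
    by apply: hq01; rewrite ltn_neqAle hzr -ltnS ltn_ord.
  have hnp : forall z, 0 <= nuprime nu z.
    move=> z; rewrite /nuprime mulr_ge0 //; last by case: ifP.
    by rewrite invr_ge0 subr_ge0 ltW.
  have hsnp : \sum_z nuprime nu z = 1.
    rewrite /nuprime -mulr_sumr (bigD1 ord0) //= add0r.
    move: hnu1; rewrite (bigD1 ord0) //= => h.
    have -> : \sum_(i | i != ord0) (if val i == 0%N then 0 else nu i) = 1 - nu ord0.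
      rewrite -h addrAC subrr add0r; apply: eq_bigr => i hi; rewrite ifN //.
    by rewrite mulVf.
  have hq0 : 0 <= q0 <= 1 by apply: hq01; rewrite /=.
  case/andP: hq0 => hq0a hq0b.
  have S0 : 0 <= \sum_z Mell q ord0 z * nuprime nu z.
    by apply: sumr_ge0 => z _; rewrite mulr_ge0 // (andP (hMell z)).1.
  have S1 : \sum_z Mell q ord0 z * nuprime nu z <= 1.
    rewrite -hsnp; apply: ler_sum => z _; apply: ler_piMl => //.
    by case/andP: (hMell z).
  apply/andP; split; first exact: mulr_ge0.
  by apply: le_trans S1; apply: ler_piMl.
- transitivity (q0^-1 * \sum_x V ord0 x * \sum_z W x z * nuprime nu z).
    rewrite mulr_sumr; apply: eq_bigr => x _; rewrite /alpha1.
    by rewrite /q0 /W; field; rewrite hlam -/q0 q0n.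
  by rewrite key2 np0 mulr0.
move=> x; rewrite /alpha /alpha1 /alpha0.
have -> : \sum_z W x z * nu z
          = nu ord0 * W x ord0 + (1 - nu ord0) * \sum_z W x z * nuprime nu z.
  rewrite (bigD1 ord0) //= [X in _ = _ + _ * X](bigD1 ord0) //= np0 mulr0 add0r.
  rewrite mulr_sumr mulrC; congr (_ + _); apply: eq_bigr => z hz.
  rewrite /nuprime ifN; last by apply/eqP => h; move: hz; have -> : z = ord0 by apply: val_inj.
  by field.
rewrite /W; ring.
Qed.
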